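(* Let $\nu$ be a Lévy measure on $\mathbb R$, let $\beta>0$, let $f\in l^\infty(\mathrm{supp}(\nu))\cap l^1(\mathrm{supp}(\nu))$ and let $k$ be a function on $\mathrm{supp}(\nu)$ which is bounded from above. Then the equation $$\varphi(x)=\exp\Big\{k(x)-\beta f(x)\int f(z)\varphi(z)\,\nu(dz)\Big\},\qquad x\in\mathrm{supp}(\nu),$$ defines a function $\varphi:\mathrm{supp}(\nu)\to\mathbb R$ in a well-defined (unique) way, and this $\varphi$ is bounded.
   Context: $l^\infty(\mathrm{supp}(\nu))\cap l^1(\mathrm{supp}(\nu))$ denotes the set of bounded, $\nu$-integrable real functions on the support of $\nu$. *)

(* Defs.v *)
From HB Require Import structures.
From mathcomp Require Import all_boot all_order all_algebra.
From mathcomp Require Import all_classical all_reals all_analysis.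
Set Implicit Arguments. Unset Strict Implicit. Unset Printing Implicit Defensive.
Import Order.TTheory GRing.Theory Num.Theory.
Import numFieldNormedType.Exports.
Local Open Scope classical_set_scope.
Local Open Scope ring_scope.

Definition levy_measure (R : realType) (nu : {measure set R -> \bar R}) : Prop :=
  nu [set 0] = 0%E /\
  (\int[nu]_x (Num.min 1 (x ^+ 2))%:E < +oo)%E.

Definition msupp (R : realType) (nu : {measure set R -> \bar R}) : set R :=
  [set x | forall e : R, 0 < e -> (0 < nu (ball x e))%E].

(* Main.v *)
Require Import Defs.
From HB Require Import structures.
From mathcomp Require Import all_boot all_order all_algebra.
From mathcomp Require Import all_classical all_reals all_analysis.
From mathcomp Require Import lra ring.
Import Order.TTheory GRing.Theory Num.Theory.
Import numFieldNormedType.Exports.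
Local Open Scope classical_set_scope.
Local Open Scope ring_scope.

Lemma expR_lip (R : realType) (u v : R) :
  `|expR u - expR v| <= expR (Num.max u v) * `|u - v|.
Proof.
wlog vu : u v / v <= u.
  move=> H; case/orP: (le_total v u) => [vu|uv]; first exact: H.
  by rewrite distrC maxC (distrC u) H.
have -> : Num.max u v = u by rewrite max_l.
have -> : expR v = expR u * expR (v - u) by rewrite -expRD addrC subrK.
rewrite -{1}(mulr1 (expR u)) -mulrBr normrM ger0_norm ?expR_ge0 //.
apply: ler_wpM2l; first exact: expR_ge0.
have := expR_ge1Dx (v - u); have := expR_le1 (v - u).
rewrite subr_le0 vu => e1 e2.
rewrite ger0_norm; last by rewrite subr_ge0.
rewrite ger0_norm; last by rewrite subr_ge0.
lra.
Qed.

Lemma closed_msupp (R : realType) (nu : {measure set R -> \bar R}) :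
  measurable (msupp nu).
Proof.
apply: measurable_realfun.closed_measurable => x clx e e0.
have e20 : 0 < e / 2 by rewrite divr_gt0.
have [y [Sy bxy]] := clx (ball x (e/2)) (nbhsx_ballx x (e/2) e20).
apply: (lt_le_trans (Sy _ e20)).
apply: le_measure; rewrite ?inE; try exact: measurable_realfun.measurable_ball.
move=> z byz; rewrite (splitr e).
exact: ball_triangle bxy byz.
Qed.

Theorem lemma3p3 (R : realType) (nu : {measure set R -> \bar R})
  (beta : R) (f k : R -> R) :
  levy_measure nu ->
  0 < beta ->
  (exists M : R, forall x, msupp nu x -> `|f x| <= M) ->
  nu.-integrable (msupp nu) (EFin \o f) ->
  measurable_fun (msupp nu) k ->
  (exists M : R, forall x, msupp nu x -> k x <= M) ->
  exists phi : R -> R,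
    [/\ nu.-integrable (msupp nu) (fun z => (f z * phi z)%:E),
        (forall x, msupp nu x ->
           phi x = expR (k x - beta * f x *
                         Rintegral nu (msupp nu) (fun z => f z * phi z))),
        (forall psi : R -> R,
           (forall x, msupp nu x ->
              psi x = expR (k x - beta * f x *
                            Rintegral nu (msupp nu) (fun z => f z * psi z))) ->
           forall x, msupp nu x -> psi x = phi x) &
        (exists M : R, forall x, msupp nu x -> `|phi x| <= M)].
Proof.
move=> _ beta0 [Mf0 hMf] intf mk [Mk hMk].
have mS := @closed_msupp R nu.
set S := msupp nu in hMf intf mk hMk mS *.
pose Mf := Num.max Mf0 0.
have Mf_ge0 : 0 <= Mf by rewrite le_max lexx orbT.
have hf x : S x -> `|f x| <= Mf by move=> Sx; rewrite le_max hMf.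
have /integrableP[mfE _] := intf.
have mf : measurable_fun S f by apply/measurable_realfun.measurable_EFinP.
have intB (h : R -> R) (C : R) : measurable_fun S h ->
    (forall x, S x -> `|h x| <= C * `|f x|) -> nu.-integrable S (EFin \o h).
  move=> mh hb.
  apply: (le_integrable mS (g := fun x => (C%:E * (abse \o (EFin \o f)) x)%E)).
  - by apply/measurable_realfun.measurable_EFinP.
  - move=> x Sx /=; rewrite lee_fin.
    exact: le_trans (hb x Sx) (ler_norm _).
  - by apply: integrableZl => //; exact: integrable_abse.
pose g (c : R) (x : R) := f x * expR (k x - beta * f x * c).
pose G c := Rintegral nu S (g c).
have mg c : measurable_fun S (g c).
  change (measurable_fun S (f \* (expR \o (k \- ((cst beta \* f) \* cst c))))).
  have m1 : measurable_fun S (cst beta \* f).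
    exact: (measurable_realfun.measurable_funM (measurable_cst _) mf).
  have m2 : measurable_fun S ((cst beta \* f) \* cst c).
    exact: (measurable_realfun.measurable_funM m1 (measurable_cst _)).
  have m3 := measurable_realfun.measurable_funB mk m2.
  have m4 := measurableT_comp (@measurable_realfun.measurable_expR R) m3.
  exact: (measurable_realfun.measurable_funM mf m4).
have hu x c : S x -> k x - beta * f x * c <= Mk + beta * Mf * `|c|.
  move=> Sx; have h1 : - (f x * c) <= `|f x| * `|c|.
    by rewrite -normrM -normrN ler_norm.
  have h2 : `|f x| * `|c| <= Mf * `|c| by apply: ler_wpM2r; [exact: normr_ge0 | exact: hf].
  have h3 : - (beta * f x * c) <= beta * (Mf * `|c|).
    rewrite -mulrA -mulrN; apply: ler_wpM2l; [exact: ltW | exact: le_trans h1 h2].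
  have := hMk x Sx; rewrite mulrA in h3; lra.
have gb c x : S x -> `|g c x| <= expR (Mk + beta * Mf * `|c|) * `|f x|.
  move=> Sx; rewrite /g normrM (ger0_norm (expR_ge0 _)) mulrC.
  by apply: ler_wpM2r => //; rewrite ler_expR hu.
have intg c : nu.-integrable S (EFin \o g c) by apply: intB (mg c) (gb c).
have mN (h : R -> R) : measurable_fun S h -> measurable_fun S (fun x => `|h x|).
  move=> mh; exact: (measurableT_comp (@measurable_realfun.normr_measurable R setT) mh).
have intAbs : nu.-integrable S (EFin \o (fun x => `|f x|)).
  by apply: (intB _ 1) => [|x Sx]; [exact: mN | rewrite mul1r normr_id].
pose I := Rintegral nu S (fun x => `|f x|).
have I_ge0 : 0 <= I by apply: Rintegral_ge0 => x _.
have RintB (h : R -> R) (C : R) : 0 <= C -> measurable_fun S h ->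
    (forall x, S x -> `|h x| <= C * `|f x|) -> `|Rintegral nu S h| <= C * I.
  move=> C0 mh hb.
  apply: le_trans (le_normr_Rintegral mS (intB h C mh hb)) _.
  rewrite /I -RintegralZl //.
  apply: le_Rintegral => //.
  - by apply: (intB _ C) => [|x Sx]; [exact: mN | rewrite normr_id hb].
  - apply: (intB _ C) => [|x Sx].
      exact: (measurable_realfun.measurable_funM (measurable_cst _) (mN _ mf)).
    by rewrite normrM normr_id (ger0_norm C0).
have Gb c : `|G c| <= expR (Mk + beta * Mf * `|c|) * I.
  apply: RintB; [exact: expR_ge0 | exact: mg | exact: gb].
have BMf0 : 0 <= beta * Mf by rewrite mulr_ge0 // ltW.
have Glip B c c' : `|c| <= B -> `|c'| <= B ->
    `|G c - G c'| <= expR (Mk + beta * Mf * B) * (beta * Mf * `|c - c'|) * I.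
  move=> cB c'B; rewrite /G -(RintegralB mS (intg c) (intg c')).
  apply: RintB.
  - by rewrite mulr_ge0 ?expR_ge0 // mulr_ge0.
  - exact: (measurable_realfun.measurable_funB (mg c) (mg c')).
  move=> x Sx; rewrite /g -mulrBr normrM mulrC.
  apply: ler_wpM2r => //.
  apply: le_trans (expR_lip _ _ _) _.
  apply: ler_pM; [exact: expR_ge0 | exact: normr_ge0 | |].
  - rewrite ler_expR ge_max; apply/andP; split.
      apply: le_trans (hu x c Sx) _; rewrite lerD2l; exact: ler_wpM2l.
    apply: le_trans (hu x c' Sx) _; rewrite lerD2l; exact: ler_wpM2l.
  - have -> : k x - beta * f x * c - (k x - beta * f x * c') = beta * f x * (c' - c) by ring.
    rewrite !normrM (gtr0_norm beta0) distrC.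
    apply: ler_wpM2r => //; apply: ler_wpM2l; [exact: ltW | exact: hf].
have Gmono c c' : c <= c' -> G c' <= G c.
  move=> cc'; apply: (le_Rintegral mS (intg c') (intg c)) => x Sx; rewrite /g.
  case: (lerP 0 (f x)) => fx.
    apply: ler_wpM2l => //; rewrite ler_expR; apply: lerB => //.
    by apply: ler_wpM2l => //; rewrite mulr_ge0 // ltW.
  have h : beta * f x * c' <= beta * f x * c.
    have h0 : 0 <= (beta * - f x) * (c' - c).
      by rewrite mulr_ge0 // ?subr_ge0 // mulr_ge0 ?oppr_ge0 // ltW.
    nra.
  have e : expR (k x - beta * f x * c) <= expR (k x - beta * f x * c').
    by rewrite ler_expR; apply: lerB.
  nra.
pose H c := c - G c.
have cont : continuous H.
  move=> c0; apply/cvgrPdist_le => /= e e0.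
  pose B := `|c0| + 1.
  pose L := expR (Mk + beta * Mf * B) * (beta * Mf) * I.
  have L0 : 0 <= L by rewrite mulr_ge0 // mulr_ge0 // expR_ge0.
  have K0 : 0 < L + 1 by lra.
  pose delta := Num.min 1 (e / (L + 1)).
  have d0 : 0 < delta by rewrite lt_min ltr01 divr_gt0.
  apply/nbhs_ballP; exists delta => // t /= ht.
  move: ht; rewrite lt_min => /andP[ht1 ht2].
  have tB : `|t| <= B.
    have := ler_normB c0 (c0 - t); rewrite opprB addrC subrK /B; lra.
  have c0B : `|c0| <= B by rewrite /B lerDl.
  have hl := Glip B c0 t c0B tB.
  have -> : H c0 - H t = (c0 - t) - (G c0 - G t) by rewrite /H; ring.
  apply: le_trans (ler_normB _ _) _.
  have : `|c0 - t| * (L + 1) < e by rewrite -ltr_pdivlMr.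
  have eL : expR (Mk + beta * Mf * B) * (beta * Mf * `|c0 - t|) * I = L * `|c0 - t|.
    by rewrite /L; ring.
  rewrite eL in hl.
  have eK : `|c0 - t| * (L + 1) = L * `|c0 - t| + `|c0 - t| by ring.
  rewrite eK; lra.
pose A := expR Mk * I.
have A0 : 0 <= A by rewrite mulr_ge0 // expR_ge0.
have G0 : `|G 0| <= A by have := Gb 0; rewrite normr0 mulr0 addr0.
move: G0; rewrite ler_norml => /andP[G0l G0r].
have GA := Gmono 0 A A0.
have GmA : G 0 <= G (- A) by apply: Gmono; rewrite oppr_le0.
have [cs _ Hcs] : exists2 c, c \in `[- A, A] & H c = 0.
  apply: IVT; first by apply: (le_trans _ A0); rewrite oppr_le0.
    exact: continuous_subspaceT.
  rewrite ge_min le_max; apply/andP; split; apply/orP.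
    by left; rewrite /H subr_le0; exact: le_trans G0l GmA.
  by right; rewrite /H subr_ge0; exact: le_trans GA G0r.
have Gcs : G cs = cs by move/eqP: Hcs; rewrite /H subr_eq0 => /eqP.
pose phi x := expR (k x - beta * f x * cs).
exists phi; split.
- exact: intg cs.
- move=> x Sx.
  by have -> : Rintegral nu S (fun z => f z * phi z) = cs by exact: Gcs.
- move=> psi hpsi x Sx.
  set c' := Rintegral nu S (fun z => f z * psi z) in hpsi.
  have Gc' : G c' = c'.
    rewrite /G /c'; apply: eq_Rintegral => z; rewrite inE => Sz.
    by rewrite /g hpsi.
  have ecs : c' = cs.
    case: (ltgtP c' cs) => // hc.
      by have := Gmono _ _ (ltW hc); rewrite Gc' Gcs => /(lt_le_trans hc); rewrite ltxx.
    by have := Gmono _ _ (ltW hc); rewrite Gc' Gcs => /(lt_le_trans hc); rewrite ltxx.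
  by rewrite hpsi // ecs.
- exists (expR (Mk + beta * Mf * `|cs|)) => x Sx.
  by rewrite /phi ger0_norm ?expR_ge0 // ler_expR hu.
Qed.
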